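(* Let $T$ and $Q$ be selfadjoint bounded operators on a Hilbert space $V$, with $Q$ nonnegative, and let $A:=Q(I+iT)^{-1}$. Then the Cayley transform $C=(I-A)(I+A)^{-1}=(I-Q+iT)(I+Q+iT)^{-1}$ of $A$ is a Ritt operator.
   Context: A bounded operator $C$ is a Ritt operator if $\sigma(C)\subseteq\mathbb{D}\cup\{1\}$, where $\mathbb{D}$ is the open unit disc, and $\sup_{|z|>1}\|(z-1)(z-C)^{-1}\|<\infty$. *)

(* Defs.v *)
From HB Require Import structures.
From mathcomp Require Import all_boot all_order all_algebra.
From mathcomp Require Import complex.
From mathcomp Require Import reals.
Set Implicit Arguments. Unset Strict Implicit. Unset Printing Implicit Defensive.
Import Order.TTheory GRing.Theory Num.Theory.
Local Open Scope ring_scope.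

Section Hilbert.
Variables (R : realType) (V : lmodType R[i]) (ip : V -> V -> R[i]).

Definition hnorm (x : V) : R := Num.sqrt (complex.Re (ip x x)).

Definition is_hilbert : Prop :=
  [/\ forall (a : R[i]) (x y z : V), ip (a *: x + y) z = a * ip x z + ip y z,
      forall x y : V, ip y x = conjc (ip x y),
      forall x : V, 0 <= ip x x,
      forall x : V, ip x x = 0 -> x = 0
    & forall u : nat -> V,
        (forall e : R, 0 < e -> exists N : nat, forall m n : nat,
            (N <= m)%N -> (N <= n)%N -> hnorm (u m - u n) < e) ->
        exists l : V, forall e : R, 0 < e -> exists N : nat, forall n : nat,
            (N <= n)%N -> hnorm (u n - l) < e].

Definition bounded_op (f : V -> V) : Prop :=
  (forall (a : R[i]) (x y : V), f (a *: x + y) = a *: f x + f y) /\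
  exists M : R, forall x : V, hnorm (f x) <= M * hnorm x.

Definition is_inverse_op (f g : V -> V) : Prop :=
  bounded_op g /\ (forall x, g (f x) = x) /\ (forall x, f (g x) = x).

Definition invertible_op (f : V -> V) : Prop := exists g, is_inverse_op f g.

Definition selfadjoint (f : V -> V) : Prop := forall x y, ip (f x) y = ip x (f y).

Definition nonneg_op (f : V -> V) : Prop := forall x, 0 <= ip (f x) x.

(* Ritt operator: sigma(C) is contained in D cup {1}, and
   sup_{|z|>1} || (z-1) (z-C)^{-1} || < oo *)
Definition ritt (Cop : V -> V) : Prop :=
  bounded_op Cop /\
  (forall z : R[i], ~ (`|z| < 1) -> z != 1 -> invertible_op (fun x => z *: x - Cop x)) /\
  exists M : R, forall z : R[i], 1 < `|z| ->
    forall Rz : V -> V, is_inverse_op (fun x => z *: x - Cop x) Rz ->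
    forall x : V, hnorm ((z - 1) *: Rz x) <= M * hnorm x.

End Hilbert.

(* Main.v *)
Require Import Defs.
From HB Require Import structures.
From mathcomp Require Import all_boot all_order all_algebra.
From mathcomp Require Import complex.
From mathcomp Require Import reals.
From Stdlib Require Import IndefiniteDescription FunctionalExtensionality.
From mathcomp Require Import ring lra.
Import Order.TTheory GRing.Theory Num.Theory.
Local Open Scope ring_scope.
Local Open Scope complex_scope.
Set Implicit Arguments. Unset Strict Implicit. Unset Printing Implicit Defensive.

Lemma zm1 (G : zmodType) (a b c d e : G) : (a - b + c) - (d - e + c) = (a - d) - (b - e).
Proof. by rewrite opprD addrA addrAC addrK !opprB addrACA [RHS]addrACA (addrC (- b)). Qed.

Lemma lm1 (K : pzRingType) (W : lmodType K) (z : K) (p q r : W) :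
  z *: (p + q + r) - (p + r - q) = (z - 1) *: p + (z + 1) *: q + (z - 1) *: r.
Proof.
rewrite !scalerBl !scalerDl !scale1r !scalerDr.
rewrite !opprD !opprK !addrA.
by rewrite (ACl (1*4*2*6*3*5)).
Qed.

Section H.
Variables (R : realType) (V : lmodType R[i]) (ip : V -> V -> R[i]).
Hypothesis HV : is_hilbert ip.
Local Notation nrm := (hnorm ip).
Local Notation N2 x := (complex.Re (ip x x)).

Lemma ipDZl a x y z : ip (a *: x + y) z = a * ip x z + ip y z.
Proof. by case: HV. Qed.
Lemma ipC x y : ip y x = conjc (ip x y).
Proof. by case: HV. Qed.
Lemma ip_ge0 x : 0 <= ip x x.
Proof. by case: HV. Qed.
Lemma ip_eq0 x : ip x x = 0 -> x = 0.
Proof. by case: HV => _ _ _ h _; apply: h. Qed.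

Lemma ip0l z : ip 0 z = 0.
Proof.
have := ipDZl 1 0 0 z; rewrite scaler0 addr0 mul1r => h.
by apply: (@addrI _ (ip 0 z)); rewrite addr0 -h.
Qed.
Lemma ipDl x y z : ip (x + y) z = ip x z + ip y z.
Proof. by rewrite -[x]scale1r ipDZl mul1r scale1r. Qed.
Lemma ipZl a x z : ip (a *: x) z = a * ip x z.
Proof. by rewrite -[a *: x]addr0 ipDZl ip0l addr0. Qed.
Lemma ipNl x z : ip (- x) z = - ip x z.
Proof. by rewrite -scaleN1r ipZl mulN1r. Qed.
Lemma ipBl x y z : ip (x - y) z = ip x z - ip y z.
Proof. by rewrite ipDl ipNl. Qed.
Lemma ipDr x y z : ip z (x + y) = ip z x + ip z y.
Proof. by rewrite (ipC (x+y)) ipDl raddfD /= -!ipC. Qed.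
Lemma ipZr a x z : ip z (a *: x) = conjc a * ip z x.
Proof. by rewrite (ipC (a *: x)) ipZl rmorphM /= -ipC. Qed.
Lemma ipNr x z : ip z (- x) = - ip z x.
Proof. by rewrite (ipC (- x)) ipNl raddfN /= -ipC. Qed.
Lemma ipBr x y z : ip z (x - y) = ip z x - ip z y.
Proof. by rewrite ipDr ipNr. Qed.
Lemma ip0r z : ip z 0 = 0.
Proof. by rewrite ipC ip0l conjc0. Qed.

Lemma ipxx x : ip x x = (N2 x)%:C.
Proof. have := ip_ge0 x; case: (ip x x) => a b; rewrite lecE /= => /andP[/eqP -> _]. by []. Qed.
Lemma N2_ge0 x : 0 <= N2 x.
Proof. by have := ip_ge0 x; rewrite ipxx lecR. Qed.
Lemma nrm_ge0 x : 0 <= nrm x.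
Proof. exact: sqrtr_ge0. Qed.
Lemma nrm_sq x : nrm x ^+ 2 = N2 x.
Proof. by rewrite /hnorm sqr_sqrtr ?N2_ge0. Qed.
Lemma nrm_eq0 x : nrm x = 0 -> x = 0.
Proof.
move=> h; apply: ip_eq0; rewrite ipxx -nrm_sq h expr0n /=. by [].
Qed.
Lemma nrm0 : nrm 0 = 0.
Proof. by rewrite /hnorm ip0l /= sqrtr0. Qed.

Lemma ReC x y : complex.Re (ip y x) = complex.Re (ip x y).
Proof. by rewrite ipC; case: (ip x y). Qed.

Lemma N2D x y : N2 (x + y) = N2 x + N2 y + 2 * complex.Re (ip x y).
Proof.
rewrite ipDl !ipDr !raddfD /= (ReC y x).
by ring.
Qed.
Lemma N2Z a x : N2 (a *: x) = Normc.normc a ^+ 2 * N2 x.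
Proof.
rewrite ipZl ipZr mulrA ipxx; set r := N2 x.
case: a => p q /=; rewrite sqr_sqrtr ?addr_ge0 ?sqr_ge0 //; ring.
Qed.
Lemma nrmZ a x : nrm (a *: x) = Normc.normc a * nrm x.
Proof.
rewrite /hnorm N2Z sqrtrM ?sqr_ge0 // sqrtr_sqr ger0_norm //.
by case: a => p q /=; apply: sqrtr_ge0.
Qed.
Lemma nrmN x : nrm (- x) = nrm x.
Proof. by rewrite -scaleN1r nrmZ /= oppr0 expr0n addr0 sqrtr_sqr normrN normr1 mul1r. Qed.
Lemma nrmB x y : nrm (x - y) = nrm (y - x).
Proof. by rewrite -nrmN opprB. Qed.

Lemma N2Zr (r : R) x : N2 (r%:C *: x) = r ^+ 2 * N2 x.
Proof. by rewrite N2Z /= expr0n /= addr0 sqrtr_sqr real_normK ?num_real. Qed.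

Lemma CS x y : complex.Re (ip x y) <= nrm x * nrm y.
Proof.
set a := nrm y; set b := nrm x.
have a0 : 0 <= a by apply: nrm_ge0.
have b0 : 0 <= b by apply: nrm_ge0.
have [az|aneq] := eqVneq a 0.
  by move: az; rewrite /a => /nrm_eq0 ->; rewrite ip0r nrm0 mulr0 /=.
have [bz|bneq] := eqVneq b 0.
  by move: bz; rewrite /b => /nrm_eq0 ->; rewrite ip0l nrm0 mul0r /=.
have := N2_ge0 (a%:C *: x + (- (b%:C *: y))).
rewrite N2D ipNl ipNr opprK !N2Zr ipNr ipZl ipZr -!nrm_sq -/a -/b.
set c := complex.Re (ip x y).
have -> : complex.Re (- (a%:C * ((b)%:C^* * ip x y))) = - (a * b) * c.
  rewrite /c; case: (ip x y) => u v /=; ring.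
move=> h.
have ab0 : 0 < a * b by rewrite mulr_gt0 // lt_def ?aneq ?bneq.
rewrite -(ler_pM2l ab0); nra.
Qed.

Lemma nrmD x y : nrm (x + y) <= nrm x + nrm y.
Proof.
rewrite -[nrm x + nrm y]ger0_norm ?addr_ge0 ?nrm_ge0 // -sqrtr_sqr /hnorm.
rewrite ler_sqrt ?sqr_ge0 // N2D -/(hnorm ip x) -/(hnorm ip y) -!nrm_sq.
have := CS x y; nra.
Qed.
Lemma nrm_le0 x : nrm x <= 0 -> x = 0.
Proof. by move=> h; apply: nrm_eq0; apply/eqP; rewrite eq_le h nrm_ge0. Qed.

Lemma nrm_small x : (forall e : R, 0 < e -> nrm x <= e) -> x = 0.
Proof.
move=> h; apply: nrm_le0; rewrite leNgt; apply/negP => hp.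
have := h (nrm x / 2) (divr_gt0 hp (ltr0Sn _ 1)); lra.
Qed.

Lemma bernoulli_q (q h : R) : 0 <= q -> 0 <= h -> q * (1 + h) = 1 ->
  forall n : nat, q ^+ n * (1 + n%:R * h) <= 1.
Proof.
move=> q0 h0 qh; elim=> [|n IH]; first by rewrite expr0 mul0r addr0 mul1r.
have e1 : q ^+ n.+1 * (1 + n.+1%:R * h) <= q ^+ n.+1 * ((1 + n%:R * h) * (1 + h)).
  apply: ler_wpM2l; first exact: exprn_ge0.
  rewrite -natr1 mulrDl mul1r; have : 0 <= n%:R * h * h.
    by rewrite !mulr_ge0 ?ler0n.
  lra.
apply: (le_trans e1).
have -> : q ^+ n.+1 * ((1 + n%:R * h) * (1 + h)) = q ^+ n * (1 + n%:R * h) * (q * (1 + h)).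
  by rewrite exprS; ring.
by rewrite qh mulr1.
Qed.

Lemma geo (q e : R) : 0 <= q -> q < 1 -> 0 < e -> exists N : nat, q ^+ N < e.
Proof.
move=> q0 q1 e0.
have [->|qn0] := eqVneq q 0; first by exists 1%N; rewrite expr1.
have qp : 0 < q by rewrite lt_def qn0.
set h := q^-1 - 1.
have h0 : 0 < h by rewrite /h subr_gt0 invf_gt1.
have qh : q * (1 + h) = 1 by rewrite /h addrC subrK mulfV.
set N := Num.bound (2 / e / h).
have hN : 2 / e / h < N%:R.
  by apply: archi_boundP; rewrite !divr_ge0 ?ltW.
exists N.
have B := bernoulli_q q0 (ltW h0) qh N.
have hN' : 2 / e < N%:R * h by rewrite -ltr_pdivrMr.
have qN0 : 0 <= q ^+ N by apply: exprn_ge0.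
have : q ^+ N * (2 / e) <= 1.
  apply: le_trans B; apply: ler_wpM2l => //; lra.
rewrite mulrA ler_pdivrMr // mul1r => H.
lra.
Qed.
Lemma nrm_tri3 x y z : nrm (x - z) <= nrm (x - y) + nrm (y - z).
Proof. by have := nrmD (x - y) (y - z); rewrite addrA subrK. Qed.

Lemma fixpt (F : V -> V) (q : R) : 0 <= q -> q < 1 ->
  (forall x y, nrm (F x - F y) <= q * nrm (x - y)) -> exists x, F x = x.
Proof.
move=> q0 q1 hF.
pose u n := iter n F 0.
set d := nrm (u 1%N - u 0%N).
have d0 : 0 <= d by apply: nrm_ge0.
have step : forall n, nrm (u n.+1 - u n) <= q ^+ n * d.
  elim=> [|n IH]; first by rewrite expr0 mul1r.
  apply: le_trans (hF _ _) _; rewrite exprS -mulrA; exact: ler_wpM2l.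
have tail : forall n k, nrm (u (n + k)%N - u n) * (1 - q) <= d * (q ^+ n - q ^+ (n + k)).
  move=> n; elim=> [|k IH]; first by rewrite addn0 !subrr nrm0 !mul0r mulr0.
  have T3 := nrm_tri3 (u (n + k.+1)%N) (u (n + k)%N) (u n).
  have S := step (n + k)%N; rewrite -addSnnS addSn in T3 *.
  have qk : 0 <= q ^+ (n + k) by apply: exprn_ge0.
  have : nrm (u (n + k).+1 - u n) * (1 - q) <=
    (nrm (u (n + k).+1 - u (n + k)%N) + nrm (u (n + k)%N - u n)) * (1 - q).
    by apply: ler_wpM2r => //; lra.
  rewrite exprS; nra.
have cauchy : forall e : R, 0 < e -> exists N : nat, forall m n : nat,
    (N <= m)%N -> (N <= n)%N -> nrm (u m - u n) < e.
  move=> e e0.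
  have e1 : 0 < e * (1 - q) / (d + 1) by rewrite !divr_gt0 ?mulr_gt0 ?subr_gt0 //; lra.
  have [N hN] := geo q0 q1 e1.
  exists N => m n hm hn.
  have key : forall a b, (N <= a)%N -> nrm (u (a + b)%N - u a) < e.
    move=> a b ha; have := tail a b.
    have qa : q ^+ a <= q ^+ N by apply: ler_wiXn2l => //; exact: ltW.
    have qb : 0 <= q ^+ (a + b) by apply: exprn_ge0.
    have : q ^+ N * (d + 1) < e * (1 - q).
      by rewrite -ltr_pdivlMr //; lra.
    have : 0 <= nrm (u (a + b)%N - u a) by apply: nrm_ge0.
    move=> hn0 hq ht.
    have : nrm (u (a + b)%N - u a) * (1 - q) < e * (1 - q) by nra.
    by rewrite ltr_pM2r // subr_gt0.
  case/orP: (leq_total m n) => hmn.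
    by rewrite nrmB -(subnKC hmn); apply: key.
  by rewrite -(subnKC hmn); apply: key.
have [l hl] : exists l : V, forall e : R, 0 < e -> exists N : nat, forall n : nat,
    (N <= n)%N -> nrm (u n - l) < e.
  by case: HV => _ _ _ _; apply.
exists l; apply/eqP; rewrite -subr_eq0; apply/eqP; apply: nrm_small => e e0.
have e2 : 0 < e / 2 by rewrite divr_gt0.
have [N hN] := hl _ e2.
have h1 := hN N (leqnn N); have h2 := hN N.+1 (leqnSn N).
have h3 := hF l (u N).
have uS : u N.+1 = F (u N) by [].
rewrite uS in h2.
have T3 := nrm_tri3 (F l) (F (u N)) l.
rewrite nrmB in h1.
have : q * nrm (l - u N) <= nrm (l - u N) by rewrite ler_piMl ?nrm_ge0 // ltW.
lra.
Qed.
Section Ops.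
Implicit Types f g : V -> V.

Lemma lin0 f : bounded_op ip f -> f 0 = 0.
Proof.
case=> hl _; have := hl 1 0 0; rewrite scaler0 addr0 scale1r => h.
by apply: (@addrI _ (f 0)); rewrite addr0 -h.
Qed.
Lemma linD f : bounded_op ip f -> forall x y, f (x + y) = f x + f y.
Proof. by move=> hf x y; case: (hf) => hl _; rewrite -[x]scale1r hl !scale1r. Qed.
Lemma linZ f : bounded_op ip f -> forall a x, f (a *: x) = a *: f x.
Proof. by move=> hf a x; case: (hf) => hl _; rewrite -[a *: x]addr0 hl (lin0 hf) addr0. Qed.
Lemma linN f : bounded_op ip f -> forall x, f (- x) = - f x.
Proof. by move=> hf x; rewrite -scaleN1r (linZ hf) scaleN1r. Qed.
Lemma linB f : bounded_op ip f -> forall x y, f (x - y) = f x - f y.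
Proof. by move=> hf x y; rewrite (linD hf) (linN hf). Qed.

Lemma bnd f : bounded_op ip f -> exists M, 0 <= M /\ forall x, nrm (f x) <= M * nrm x.
Proof.
case=> _ [M hM]; exists `|M|; split => // x; apply: le_trans (hM x) _.
by apply: ler_wpM2r; [apply: nrm_ge0 | apply: ler_norm].
Qed.

Lemma mk_bop f : (forall a x y, f (a *: x + y) = a *: f x + f y) ->
  (exists M, forall x, nrm (f x) <= M * nrm x) -> bounded_op ip f.
Proof. by move=> h1 h2; split. Qed.

Lemma bop_ext f g : (forall x, f x = g x) -> bounded_op ip f -> bounded_op ip g.
Proof. by move=> e; rewrite (functional_extensionality f g e). Qed.

Lemma bop_id : bounded_op ip (fun x => x).
Proof. by split => //; exists 1 => x; rewrite mul1r. Qed.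

Lemma bop_add f g : bounded_op ip f -> bounded_op ip g -> bounded_op ip (fun x => f x + g x).
Proof.
move=> hf hg; have [M1 [M10 h1]] := bnd hf; have [M2 [M20 h2]] := bnd hg.
apply: mk_bop.
  by move=> a x y; rewrite (linD hf) (linD hg) (linZ hf) (linZ hg) scalerDr addrACA.
exists (M1 + M2) => x; apply: le_trans (nrmD _ _) _; rewrite mulrDl.
exact: lerD.
Qed.

Lemma bop_scale c f : bounded_op ip f -> bounded_op ip (fun x => c *: f x).
Proof.
move=> hf; have [M [M0 h]] := bnd hf; apply: mk_bop.
  by move=> a x y; rewrite (linD hf) (linZ hf) scalerDr !scalerA (mulrC a c).
exists (Normc.normc c * M) => x; rewrite nrmZ -mulrA; apply: ler_wpM2l => //.
by case: c => p r /=; apply: sqrtr_ge0.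
Qed.

Lemma bop_comp f g : bounded_op ip f -> bounded_op ip g -> bounded_op ip (fun x => f (g x)).
Proof.
move=> hf hg; have [M1 [M10 h1]] := bnd hf; have [M2 [M20 h2]] := bnd hg.
apply: mk_bop; first by move=> a x y; rewrite (linD hg) (linZ hg) (linD hf) (linZ hf).
exists (M1 * M2) => x; apply: le_trans (h1 _) _; rewrite -mulrA; exact: ler_wpM2l.
Qed.

Lemma bop_sub f g : bounded_op ip f -> bounded_op ip g -> bounded_op ip (fun x => f x - g x).
Proof.
move=> hf hg; apply: (bop_ext (f := fun x => f x + (-1) *: g x)).
  by move=> x; rewrite scaleN1r.
by apply: bop_add => //; apply: bop_scale.
Qed.

Lemma inv_ext f g h : (forall x, f x = g x) -> is_inverse_op ip f h -> is_inverse_op ip g h.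
Proof. by move=> e; rewrite (functional_extensionality f g e). Qed.

Lemma inv_unique f g h : is_inverse_op ip f g -> is_inverse_op ip f h -> forall x, g x = h x.
Proof. by move=> [_ [g1 g2]] [_ [h1 h2]] x; rewrite -{1}(h2 x) g1. Qed.

End Ops.
Lemma acc_lower (K : V -> V) : (forall x, 0 <= complex.Re (ip (K x) x)) ->
  forall x, nrm x <= nrm (x + K x).
Proof.
move=> hK x; rewrite /hnorm ler_sqrt ?N2_ge0 // N2D ReC.
have := hK x; have := N2_ge0 (K x); lra.
Qed.

Lemma acc_inv (K : V -> V) : bounded_op ip K ->
  (forall x, 0 <= complex.Re (ip (K x) x)) ->
  exists g, is_inverse_op ip (fun x => x + K x) g /\ forall y, nrm (g y) <= nrm y.
Proof.
move=> hK hacc.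
pose B := fun x => x + K x.
have hB : bounded_op ip B by apply: bop_add => //; apply: bop_id.
have low := acc_lower hacc.
have inj : forall x y, B x = B y -> x = y.
  move=> x y e; apply/eqP; rewrite -subr_eq0; apply/eqP; apply: nrm_le0.
  by apply: le_trans (low _) _; rewrite -/(B (x - y)) (linB hB) e subrr nrm0.
have [MB [MB0 hMB]] := bnd hB.
set t := (2 + MB ^+ 2)^-1.
have t0 : 0 < t by rewrite invr_gt0; have := sqr_ge0 MB; lra.
have tM : t * MB ^+ 2 <= 1.
  rewrite /t mulrC ler_pdivrMr; last by have := sqr_ge0 MB; lra.
  lra.
have t1 : t < 1.
  rewrite /t invf_lt1; last by have := sqr_ge0 MB; lra.
  by have := sqr_ge0 MB; lra.
have surj : forall y, exists x, B x = y.
  move=> y.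
  pose F := fun x => x - t%:C *: B x + t%:C *: y.
  have hF : forall x z, F x - F z = (x - z) - t%:C *: B (x - z).
    by move=> x z; rewrite /F zm1 -scalerBr (linB hB).
  have [x hx] : exists x, F x = x.
    apply: (@fixpt F (Num.sqrt (1 - t))); first exact: sqrtr_ge0.
      rewrite -{2}sqrtr1 ltr_sqrt //; lra.
    move=> x z; rewrite hF; set v := x - z.
    rewrite /hnorm -sqrtrM; last lra.
    rewrite ler_sqrt; last by rewrite mulr_ge0 ?N2_ge0 //; lra.
    have -> : v - t%:C *: B v = v + (- t)%:C *: B v by rewrite raddfN /= scaleNr.
    rewrite N2D N2Zr ipZr conjc_real.
    have -> : complex.Re ((- t)%:C * ip v (B v)) = - t * complex.Re (ip v (B v)).
      by case: (ip v (B v)) => p r /=; ring.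
    rewrite ReC.
    have h7 : complex.Re (ip (B v) v) = N2 v + complex.Re (ip (K v) v).
      by rewrite /B ipDl raddfD.
    have h1 := hacc v; have h2 := N2_ge0 v.
    have h3 : N2 (B v) <= MB ^+ 2 * N2 v.
      rewrite -!nrm_sq; have hb := hMB v; have := nrm_ge0 (B v); have := nrm_ge0 v.
      nra.
    have h4 : t ^+ 2 * N2 (B v) <= t * N2 v.
      have h6 : t ^+ 2 * N2 (B v) <= t ^+ 2 * (MB ^+ 2 * N2 v).
        by apply: ler_wpM2l => //; apply: sqr_ge0.
      have h5 : (t * MB ^+ 2) * (t * N2 v) <= 1 * (t * N2 v).
        by apply: ler_wpM2r => //; rewrite mulr_ge0 // ltW.
      lra.
    rewrite sqrrN h7; nra.
  exists x; move: hx; rewrite /F => /eqP; rewrite -subr_eq0 addrAC [X in X + _]addrAC subrr add0r.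
  rewrite addrC -scalerBr scaler_eq0 => /orP[|].
    by rewrite eq_complex /= eqxx andbT => /eqP ht; move: t0; rewrite ht ltxx.
  by rewrite subr_eq0 => /eqP.
pose g := fun y => proj1_sig (constructive_indefinite_description _ (surj y)).
have Bg : forall y, B (g y) = y.
  by move=> y; rewrite /g; case: (constructive_indefinite_description _ _).
exists g; split; last by move=> y; rewrite -{2}(Bg y); apply: low.
split; last first.
  by split => [x|x]; [apply: inj; rewrite Bg | apply: Bg].
apply: mk_bop.
  move=> a x y; apply: inj; rewrite Bg (linD hB) (linZ hB) !Bg //.
by exists 1 => y; rewrite mul1r -{2}(Bg y); apply: low.
Qed.
Lemma nrm_i x : nrm ('i%C *: x) = nrm x.
Proof. by rewrite nrmZ /= expr0n expr1n add0r sqrtr1 mul1r. Qed.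

Lemma normcE' (z : R[i]) : `|z| = (Normc.normc z)%:C.
Proof. by case: z => a b; rewrite normc_def. Qed.

Lemma normc_ge0 (z : R[i]) : 0 <= Normc.normc z.
Proof. by case: z => a b /=; apply: sqrtr_ge0. Qed.

Lemma reW (z : R[i]) : 1 <= Normc.normc z -> z != 1 ->
  0 <= complex.Re ((z + 1) / (z - 1)).
Proof.
case: z => a b /= h1 _.
rewrite subr0 addr0 mulrN opprK !mulrA -mulrDl; apply: divr_ge0.
  rewrite -sqrtr1 ler_sqrt in h1; last by rewrite addr_ge0 ?sqr_ge0.
  nra.
by rewrite addr_ge0 ?sqr_ge0.
Qed.

Lemma ge1n (z : R[i]) : ~ (`|z| < 1) -> 1 <= Normc.normc z.
Proof.
rewrite normcE' ltcE /= eqxx /= => h; rewrite leNgt; apply/negP => h'; exact: h.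
Qed.

Lemma gt1n (z : R[i]) : 1 < `|z| -> 1 < Normc.normc z.
Proof. by rewrite normcE' ltcE /= => /andP[]. Qed.

Lemma gt1_neq1 (z : R[i]) : 1 < Normc.normc z -> z != 1.
Proof.
apply: contraTneq => ->; by rewrite /= expr0n expr1n addr0 sqrtr1 ltxx.
Qed.
Section Main.
Variables (T Q : V -> V).
Hypotheses (hT : bounded_op ip T) (sT : selfadjoint ip T)
    (hQ : bounded_op ip Q) (sQ : selfadjoint ip Q) (pQ : nonneg_op ip Q).

Lemma ReiT x : complex.Re (ip ('i%C *: T x) x) = 0.
Proof.
rewrite ipZl.
have e : ip (T x) x = conjc (ip (T x) x) by rewrite -ipC sT.
move: e; case: (ip (T x) x) => p q /= [] h; lra.
Qed.

Lemma ReQ w x : 0 <= complex.Re w -> 0 <= complex.Re (ip (w *: Q x) x).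
Proof.
rewrite ipZl; have := pQ x.
case: (ip (Q x) x) => p q; rewrite lecE /= => /andP[/eqP q0 p0].
case: w => a b /= a0; rewrite -q0; nra.
Qed.

Definition Kw w := fun x => 'i%C *: T x + w *: Q x.

Lemma accK w : 0 <= complex.Re w -> forall x, 0 <= complex.Re (ip (Kw w x) x).
Proof. by move=> hw x; rewrite /Kw ipDl raddfD /= ReiT add0r; apply: ReQ. Qed.

Lemma bopK w : bounded_op ip (Kw w).
Proof. by apply: bop_add; apply: bop_scale. Qed.

Lemma main_lemma :
  invertible_op ip (fun x => x + 'i%C *: T x) /\
  forall S : V -> V, is_inverse_op ip (fun x => x + 'i%C *: T x) S ->
    let A := fun x => Q (S x) in
    invertible_op ip (fun x => x + A x) /\
    invertible_op ip (fun x => x + Q x + 'i%C *: T x) /\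
    forall P P' : V -> V,
      is_inverse_op ip (fun x => x + A x) P ->
      is_inverse_op ip (fun x => x + Q x + 'i%C *: T x) P' ->
      (forall x, (P x - A (P x)) = (P' x - Q (P' x) + 'i%C *: T (P' x))) /\
      ritt ip (fun x => P x - A (P x)).
Proof.
have hiT : bounded_op ip (fun x => 'i%C *: T x) by apply: bop_scale.
have hD : bounded_op ip (fun x => x + Q x + 'i%C *: T x).
  by apply: bop_add => //; apply: bop_add => //; apply: bop_id.
have invD : exists g, is_inverse_op ip (fun x => x + Q x + 'i%C *: T x) g.
  have [g [hg _]] := acc_inv (bopK 1) (@accK 1 ler01).
  by exists g; apply: inv_ext hg => x; rewrite /Kw scale1r addrA addrAC.
split.
  have hacc : forall x, 0 <= complex.Re (ip ('i%C *: T x) x).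
    by move=> x; rewrite ReiT.
  by have [g [hg _]] := acc_inv hiT hacc; exists g.
move=> S hS A.
case: (hS) => hSb [S1 S2].
have [P' hP'] := invD.
case: (hP') => hP'b [P'1 P'2].
split.
  exists (fun x => P' x + 'i%C *: T (P' x)); split.
    apply: (bop_comp (f := fun y => y + 'i%C *: T y) (g := P')) => //.
    by apply: bop_add => //; apply: bop_id.
  split => x.
    have -> : x + A x = (S x + Q (S x) + 'i%C *: T (S x)).
      by rewrite /A -{1}(S2 x) addrAC.
    by rewrite P'1 S2.
  by rewrite /A S1 addrAC P'2.
split; first by exists P'.
move=> P P0 hP hP0.
case: (hP) => hPb [P1 P2].
case: (hP0) => hP0b [P01 P02].
pose D := fun x => x + Q x + 'i%C *: T x.
have F : forall u, u = D (S (P u)).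
  move=> u; rewrite /D addrAC (S2 (P u)); by rewrite -{1}(P2 u).
have F3 : forall s, P (D s) = s + 'i%C *: T s.
  move=> s; rewrite -[RHS](P1 (s + 'i%C *: T s)) /A S1 /D; congr P; by rewrite addrAC.
have F4 : forall s, S (P (D s)) = s by move=> s; rewrite F3 S1.
split.
  move=> x; have p0 : P0 x = S (P x) by rewrite {1}(F x) P01.
  rewrite p0 /A; set s := S (P x).
  by rewrite -(S2 (P x)) -/s addrAC.
pose C := fun x => P x - A (P x).
have hC : bounded_op ip C.
  apply: bop_sub => //.
  apply: (bop_comp (f := Q) (g := fun x => S (P x))) => //.
  exact: (bop_comp (f := S) (g := P)).
have hD' : bounded_op ip D := hD.
have F6 : forall (z : R[i]) u, z *: u - C u = (z - 1) *: S (P u)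
    + (z + 1) *: Q (S (P u)) + (z - 1) *: ('i%C *: T (S (P u))).
  move=> z u; set s := S (P u); rewrite {1}(F u) -/s /C /A -/s -(S2 (P u)) -/s /D; exact: lm1.
have [MT [MT0 hMT]] := bnd hT.
have [MQ [MQ0 hMQ]] := bnd hQ.
set M := 1 + MT + (MQ + 2 + MT).
have key : forall z : R[i], 1 <= Normc.normc z -> z != 1 ->
    exists H, is_inverse_op ip (fun x => z *: x - C x) H /\
      forall x, nrm ((z - 1) *: H x) <= M * nrm x.
  move=> z n1 z1.
  set w := (z + 1) / (z - 1).
  have hw := reW n1 z1.
  have [G [hG Glow]] := acc_inv (bopK w) (accK hw).
  case: hG => hGb [G1 G2].
  pose B := fun x => x + Kw w x.
  have hB : bounded_op ip B by apply: bop_add; [apply: bop_id | apply: bopK].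
  have G1' : forall x, G (B x) = x := G1.
  have G2' : forall x, B (G x) = x := G2.
  have z10 : z - 1 != 0 by rewrite subr_eq0.
  have zw : (z - 1) * w = z + 1 by rewrite /w mulrCA mulfV // mulr1.
  have F7 : forall u, z *: u - C u = (z - 1) *: B (S (P u)).
    move=> u; rewrite F6 /B /Kw !scalerDr (scalerA (z - 1) w) zw.
    by rewrite [RHS]addrA [RHS]addrAC.
  pose H := fun v => (z - 1)^-1 *: D (G v).
  exists H; split.
    split.
      apply: bop_scale; exact: (bop_comp (f := D) (g := G)).
    split => u.
      rewrite /H F7 (linZ hGb) G1' (linZ hD') scalerA mulVf // scale1r.
      by rewrite -F.
    have eH : H u = D ((z - 1)^-1 *: G u) by rewrite /H (linZ hD').
    by rewrite F7 eH F4 (linZ hB) G2' scalerA mulfV // scale1r.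
  move=> x; rewrite /H scalerA mulfV // scale1r.
  set x' := G x.
  have bx : B x' = x := G2' x.
  have lx : nrm x' <= nrm x := Glow x.
  have eD : D x' = (x' + 'i%C *: T x') + Q x' by rewrite /D addrAC.
  have h1 : nrm (x' + 'i%C *: T x') <= (1 + MT) * nrm x.
    apply: le_trans (nrmD _ _) _; rewrite nrm_i.
    have := hMT x'; have : MT * nrm x' <= MT * nrm x by apply: ler_wpM2l.
    lra.
  have h2 : nrm (Q x') <= (MQ + 2 + MT) * nrm x.
    have hx0 := nrm_ge0 x; have hq0 := nrm_ge0 (Q x').
    case: (lerP (Normc.normc w) 1) => hw1.
      have := hMQ x'; have : MQ * nrm x' <= MQ * nrm x by apply: ler_wpM2l.
      have : 0 <= MT * nrm x by rewrite mulr_ge0.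
      lra.
    have e : w *: Q x' = x - (x' + 'i%C *: T x').
      by rewrite -bx /B /Kw addrA [RHS]addrC addKr.
    have : nrm (w *: Q x') <= nrm x + (1 + MT) * nrm x.
      by rewrite e; apply: le_trans (nrmD _ _) _; rewrite nrmN lerD2l.
    rewrite nrmZ => h.
    have : nrm (Q x') <= Normc.normc w * nrm (Q x') by nra.
    have : 0 <= MQ * nrm x by rewrite mulr_ge0.
    lra.
  rewrite eD; apply: le_trans (nrmD _ _) _.
  rewrite /M; lra.
change (ritt ip C).
split; first exact: hC.
split.
  by move=> z hz z1; have [H [hH _]] := key z (ge1n hz) z1; exists H.
exists M => z hz Rz hR x.
have n1 := gt1n hz.
have [H [hH hb]] := key z (ltW n1) (gt1_neq1 n1).
by rewrite (inv_unique hR hH x); apply: hb.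
Qed.
End Main.
End H.

Local Close Scope complex_scope.

Theorem lemma2p4 (R : realType) (V : lmodType R[i]) (ip : V -> V -> R[i])
    (HV : is_hilbert ip) (T Q : V -> V)
    (hT : bounded_op ip T) (sT : selfadjoint ip T)
    (hQ : bounded_op ip Q) (sQ : selfadjoint ip Q) (pQ : nonneg_op ip Q) :
  (* I + iT is invertible, and for its inverse S, with A := Q S : *)
  invertible_op ip (fun x => x + 'i%C *: T x) /\
  forall S : V -> V, is_inverse_op ip (fun x => x + 'i%C *: T x) S ->
    let A := fun x => Q (S x) in
    (* I + A and I + Q + iT are invertible, *)
    invertible_op ip (fun x => x + A x) /\
    invertible_op ip (fun x => x + Q x + 'i%C *: T x) /\
    forall P P' : V -> V,
      is_inverse_op ip (fun x => x + A x) P ->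
      is_inverse_op ip (fun x => x + Q x + 'i%C *: T x) P' ->
      (* the two expressions of the Cayley transform agree, *)
      (forall x, (P x - A (P x)) = (P' x - Q (P' x) + 'i%C *: T (P' x))) /\
      (* and it is a Ritt operator *)
      ritt ip (fun x => P x - A (P x)).
Proof. exact: (main_lemma HV hT sT hQ pQ). Qed.
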